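(* In the setting described in the context, with $C_\phi$ a Lipschitz constant of $\phi$, for every $m$, $$\sum_{[C]\ \text{green cylinder}}\ \bigl\|H_{m}|_{[C]}\bigr\|_\infty\,\nu_m([C])\le e^{C_\phi/2}.$$
   Context: Setting: $A$ ($K\times K$) and $D$ ($N\times N$) are irreducible $\{0,1\}$-matrices; $M_0$ is a $(K+N)\times(K+N)$ $\{0,1\}$-matrix with diagonal blocks $A$, $D$ and some power with all entries positive; the alphabet is $\{\alpha_1,\dots,\alpha_K,\delta_1,\dots,\delta_N\}$; $\Sigma_0$ is the one-sided SFT for $M_0$ with shift $\sigma$ and metric $d(\omega,\omega')=2^{-\min\{k:\omega_k\ne\omega'_k\}}$; $\Sigma_A,\Sigma_D$ are the points with only $\alpha$-digits, resp. only $\delta$-digits; $\phi:\Sigma_0\to\mathbb R$ is Lipschitz with $|\phi(x)-\phi(y)|\le C_\phi d(x,y)$ and has the same pressure $P$ on $\Sigma_A$ and $\Sigma_D$. $\alpha_j\delta_l$ denotes any allowed word $\alpha$-digit then $\delta$-digit, $\delta_i\alpha_k$ any allowed word $\delta$-digit then $\alpha$-digit; $\delta^n,\alpha^n$ denote words of $n$ $\delta$-, resp. $\alpha$-digits. $A'\le A$, $D'\le D$ entrywise are $\{0,1\}$-matrices with $A'\ne A$, $D'\ne D$, rows of $A'$ indexed by $\alpha$-digits that can follow a $\delta$-digit nonzero, rows of $D'$ indexed by $\delta$-digits that can follow an $\alpha$-digit nonzero; $(n_m),(n'_m)$ increasing integer sequences tending to $\infty$. $\Sigma_m\subset\Sigma_0$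 is obtained by additionally forbidding: $\alpha_j\delta_l\delta^n\delta_i\alpha_k$ with $n<n'_m-2$, or with $n\ge n'_m-2$ and $\delta_l$ followed by the first $n'_m-2$ letters of $\delta^n$ not $D'$-eligible; $\delta_i\alpha_k\alpha^n\alpha_j\delta_l$ with $n<n_m-2$, or with $n\ge n_m-2$ and $\alpha_k$ followed by the first $n_m-2$ letters of $\alpha^n$ not $A'$-eligible (eligible = all consecutive transitions allowed by the matrix). $P_m$ is the pressure of $\phi$ on $\Sigma_m$. Induced scheme: green cylinders are the 2-cylinders $[\alpha_j\delta_l]$ and $[\delta_i\alpha_k]$, and $G$ is their union. For $x\in[\delta_i\alpha_k]$ its $g_m$-preimages are the points $y=\alpha_j\delta_l w x$ (with $w$ a $\delta$-word) such that $\alpha_j\delta_l w\delta_i\alpha_k$ is allowed in $\Sigma_m$, with return time $r_m(y)=|w|+2$; symmetrically for $x\in[\alpha_j\delta_l]$. The induced transfer operator is $\mathcal L_{G,m}f(x)=\sum_{y:\,g_m(y)=x}e^{S_{r_m(y)}\phi(y)-r_m(y)P_m}f(y)$, with $S_n\phi=\sum_{i<n}\phi\circ\sigma^i$. It has spectral radius 1; $\nu_m$ is the probability with $\int\mathcal L_{G,m}f\,d\nu_m=\int f\,d\nu_m$, and $H_m=\lim_{n}\frac1n\sum_{k=0}^{n-1}\mathcal L_{G,m}^k(\mathbf 1_G)$ (uniform limit) is the positive continuous eigenfunction $\mathcal L_{G,m}H_m=H_m$ with $\int H_m\,d\nu_m=1$. *)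

(* Defs.v *)
From HB Require Import structures.
From mathcomp Require Import all_boot all_order all_algebra.
From mathcomp Require Import all_classical all_reals all_analysis.
Set Implicit Arguments.
Unset Strict Implicit.
Unset Printing Implicit Defensive.
Import Order.TTheory GRing.Theory Num.Theory.
Import numFieldNormedType.Exports.
Local Open Scope classical_set_scope.
Local Open Scope ring_scope.

(* Convention: the alphabet has K.+1 alpha-digits (indices 0..K) followed by
   N.+1 delta-digits (A' <> A and D' <> D force K,N >= 1). *)
Definition letter (K N : nat) := 'I_(K.+1 + N.+1).

Definition isA {K N : nat} (x : letter K N) : bool := (x < K.+1)%N.

Definition sq (K N : nat) := nat -> letter K N.
HB.instance Definition _ (K N : nat) := Choice.on (sq K N).
HB.instance Definition _ (K N : nat) :=
  isPointed.Build (sq K N) (fun _ => lshift N.+1 (@ord0 K)).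

(* cylinder sets and the generated (= Borel) sigma-algebra *)
Definition cyl_sets (K N : nat) : set (set (sq K N)) :=
  fun C => exists (n : nat) (w : nat -> letter K N),
    C = [set x | forall t, (t < n)%N -> x t = w t].
Notation Msp K N := (g_sigma_algebraType (@cyl_sets K N)).

Definition zero_one {n : nat} (M : 'M[int]_n) : Prop :=
  forall i j, M i j = 0 \/ M i j = 1.
Definition irreducible_mx {n : nat} (M : 'M[int]_n) : Prop :=
  forall i j, exists k : nat, 0 < (M ^+ k) i j.
Definition positive_power {n : nat} (M : 'M[int]_n) : Prop :=
  exists k : nat, forall i j, 0 < (M ^+ k) i j.

Section Shift.
Context {K N : nat}.

Definition Sigma0 (M0 : 'M[int]_(K.+1 + N.+1)) : set (sq K N) :=
  [set x | forall k, M0 (x k) (x k.+1) = 1].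
Definition SigmaA M0 : set (sq K N) := Sigma0 M0 `&` [set x | forall k, isA (x k)].
Definition SigmaD M0 : set (sq K N) := Sigma0 M0 `&` [set x | forall k, ~~ isA (x k)].

Definition shiftn (i : nat) (x : sq K N) : sq K N := fun k => x (i + k)%N.
Definition birkhoff {R : realType} (n : nat) (phi : sq K N -> R) (x : sq K N) : R :=
  \sum_(i < n) phi (shiftn i x).

Definition sq_dist {R : realType} (x y : sq K N) : R :=
  match pselect (exists k, x k != y k) with
  | left h => (2 : R) ^- (ex_minn h)
  | right _ => 0
  end.

Definition subword (x : sq K N) (p n : nat) : seq (letter K N) :=
  mkseq (fun t => x (p + t)%N) n.

Definition partition_fun {R : realType} (X : set (sq K N)) (phi : sq K N -> R)
    (n : nat) : R :=
  \sum_(w : n.-tuple (letter K N))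
    (if `[< exists x, X x /\ subword x 0 n = tval w >] then
       expR (sup [set birkhoff n phi x | x in X `&` [set x | subword x 0 n = tval w]])
     else 0).
Definition top_pressure {R : realType} (X : set (sq K N)) (phi : sq K N -> R) : R :=
  limn (fun n : nat => ln (partition_fun X phi n) / n%:R).

Definition relA (A' : 'M[int]_K.+1) (a b : letter K N) : bool :=
  match fintype.split a, fintype.split b with inl i, inl j => A' i j == 1 | _, _ => false end.
Definition relD (D' : 'M[int]_N.+1) (a b : letter K N) : bool :=
  match fintype.split a, fintype.split b with inr i, inr j => D' i j == 1 | _, _ => false end.
Definition eligible (r : rel (letter K N)) (s : seq (letter K N)) : bool :=
  if s is a :: s' then path r a s' else true.

(* the additionally forbidden words of Sigma_m (nD = n'_m, nA = n_m) *)
Definition forbD (D' : 'M[int]_N.+1) (nD : nat) (u : seq (letter K N)) : Prop :=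
  exists (aj dl di ak : letter K N) (w : seq (letter K N)),
    u = [:: aj, dl & w ++ [:: di; ak]] /\ isA aj /\ ~~ isA dl /\
    all (fun c => ~~ isA c) w /\ ~~ isA di /\ isA ak /\
    ((size w < nD - 2)%N \/
     ((nD - 2 <= size w)%N /\ ~~ eligible (relD D') (dl :: take (nD - 2) w))).
Definition forbA (A' : 'M[int]_K.+1) (nA : nat) (u : seq (letter K N)) : Prop :=
  exists (di ak aj dl : letter K N) (w : seq (letter K N)),
    u = [:: di, ak & w ++ [:: aj; dl]] /\ ~~ isA di /\ isA ak /\
    all (fun c => isA c) w /\ isA aj /\ ~~ isA dl /\
    ((size w < nA - 2)%N \/
     ((nA - 2 <= size w)%N /\ ~~ eligible (relA A') (ak :: take (nA - 2) w))).
Definition forbidden A' D' nA nD (u : seq (letter K N)) : Prop :=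
  forbD D' nD u \/ forbA A' nA u.

Definition SigmaM M0 A' D' nA nD : set (sq K N) :=
  Sigma0 M0 `&` [set x | forall p n, ~ forbidden A' D' nA nD (subword x p n)].

Definition allowed_m (M0 : 'M[int]_(K.+1 + N.+1)) A' D' nA nD
    (u : seq (letter K N)) : Prop :=
  eligible (fun a b => M0 a b == 1) u /\
  forall i n, ~ forbidden A' D' nA nD (take n (drop i u)).

Definition cyl2 (a b : letter K N) : set (sq K N) := [set x | x 0%N = a /\ x 1%N = b].
Definition green (M0 : 'M[int]_(K.+1 + N.+1)) (a b : letter K N) : bool :=
  (isA a != isA b) && (M0 a b == 1).
Definition Gset M0 : set (sq K N) := Sigma0 M0 `&` [set x | isA (x 0%N) != isA (x 1%N)].

Definition prepend (u : seq (letter K N)) (x : sq K N) : sq K N :=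
  fun k => if (k < size u)%N then nth (x 0%N) u k else x (k - size u)%N.

(* y = a b w x is a g_m-preimage of x (return time size w + 2) *)
Definition preimage_cond M0 A' D' nA nD (a b : letter K N) (w : seq (letter K N))
    (x : sq K N) : Prop :=
  isA a = isA (x 1%N) /\ isA b = isA (x 0%N) /\ all (fun c => isA c == isA (x 0%N)) w /\
  allowed_m M0 A' D' nA nD (a :: b :: w ++ [:: x 0%N; x 1%N]).

Definition LG {R : realType} M0 A' D' nA nD (phi : sq K N -> R) (Pm : R)
    (f : sq K N -> \bar R) (x : sq K N) : \bar R :=
  (\sum_(0 <= n <oo)
    \sum_(a : letter K N) \sum_(b : letter K N) \sum_(w : n.-tuple (letter K N))
      (if `[< preimage_cond M0 A' D' nA nD a b w x >] then
         (expR (birkhoff n.+2 phi (prepend [:: a, b & tval w] x) - n.+2%:R * Pm))%:E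
           * f (prepend [:: a, b & tval w] x)
       else 0))%E.

Definition cesaro_LG {R : realType} M0 A' D' nA nD (phi : sq K N -> R) (Pm : R)
    (n : nat) (x : sq K N) : \bar R :=
  ((n%:R^-1)%:E * \sum_(k < n)
     iter k (LG M0 A' D' nA nD phi Pm) (fun y => (\1_(Gset M0) y : R)%:E) x)%E.

Definition d_continuous_on {R : realType} (X : set (sq K N)) (f : sq K N -> R) : Prop :=
  forall x, X x -> forall e : R, 0 < e -> exists2 del : R, 0 < del &
    forall y, X y -> sq_dist x y < del -> `|f x - f y| < e.

End Shift.

(* Main.v *)
Require Import Defs.
From HB Require Import structures.
From mathcomp Require Import all_boot all_order all_algebra.
From mathcomp Require Import all_classical all_reals all_analysis.
From mathcomp Require Import zify ring lra.
Import Order.TTheory GRing.Theory Num.Theory.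
Import numFieldNormedType.Exports.
Local Open Scope classical_set_scope.
Local Open Scope ring_scope.

Section S.
Variables (R : realType) (K N : nat).

Lemma dist_le (x y : sq K N) n : (forall t, (t < n)%N -> x t = y t) ->
  @sq_dist K N R x y <= 2 ^- n.
Proof.
move=> xy; rewrite /sq_dist; case: pselect => [h|_]; last first.
  by rewrite invr_ge0 exprn_ge0.
case: ex_minnP => k kxy _.
have nk : (n <= k)%N.
  by rewrite leqNgt; apply/negP => /xy; apply/eqP.
rewrite -!exprVn; apply: ler_wiXn2l => //.
  by rewrite invf_le1 // ler1n.
Qed.

Lemma dist_gt0 (x y : sq K N) : x 0%N != y 0%N -> 0 < @sq_dist K N R x y.
Proof.
move=> h0; rewrite /sq_dist; case: pselect => [h|[]]; last by exists 0%N.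
by rewrite invr_gt0 exprn_gt0.
Qed.

Lemma succ_ex (M0 : 'M[int]_(K.+1 + N.+1)) : zero_one M0 -> positive_power M0 ->
  forall i, exists j, M0 i j = 1.
Proof.
move=> z01 [k Hk] i.
case: k Hk => [|k] Hk.
  have := Hk (lshift N.+1 (@ord0 K)) (rshift K.+1 (@ord0 N)).
  by rewrite expr0 mxE.
case: (pselect (exists j, M0 i j = 1)) => // hn.
have := Hk i i; rewrite exprS mxE big1 ?ltxx // => l _.
by case: (z01 i l) => hl; [rewrite hl mul0r | case: hn; exists l].
Qed.

Lemma Cphi_ge0 (M0 : 'M[int]_(K.+1 + N.+1)) (phi : sq K N -> R) Cphi :
  zero_one M0 -> positive_power M0 ->
  (forall x y, Sigma0 M0 x -> Sigma0 M0 y -> `|phi x - phi y| <= Cphi * sq_dist x y) ->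
  0 <= Cphi.
Proof.
move=> z01 pp Lip.
pose s i := odflt i [pick j | M0 i j == 1].
have hs i : M0 i (s i) = 1.
  rewrite /s; case: pickP => [j /eqP //|h].
  by have [j hj] := succ_ex M0 z01 pp i; have := h j; rewrite hj eqxx.
pose tr a : sq K N := fun t => iter t s a.
have trS a : Sigma0 M0 (tr a) by move=> k; exact: hs.
have d0 : 0 < @sq_dist K N R (tr (lshift N.+1 ord0)) (tr (rshift K.+1 ord0)).
  by apply: dist_gt0.
have := Lip _ _ (trS (lshift N.+1 ord0)) (trS (rshift K.+1 ord0)).
move=> /(le_trans (normr_ge0 _)).
by rewrite pmulr_lge0.
Qed.
End S.
Section P.
Variables (K N : nat).
Implicit Types (x y : sq K N) (u : seq (letter K N)).

Lemma prepend_lt u x k : (k < size u)%N -> prepend u x k = nth (x 0%N) u k.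
Proof. by move=> h; rewrite /prepend h. Qed.

Lemma prepend_ge u x k : (size u <= k)%N -> prepend u x k = x (k - size u)%N.
Proof. by move=> h; rewrite /prepend ltnNge h. Qed.

Lemma prepend_agree u x x' n : (forall t, (t < n)%N -> x t = x' t) ->
  forall t, (t < n + size u)%N -> prepend u x t = prepend u x' t.
Proof.
move=> h t tn; case: (ltnP t (size u)) => tu.
  by rewrite !prepend_lt // (set_nth_default (x' 0%N)).
rewrite !prepend_ge //; apply: h; lia.
Qed.

Lemma prepend_Sigma0 (M0 : 'M[int]_(K.+1 + N.+1)) a b w x : Sigma0 M0 x ->
  eligible (fun a b => M0 a b == 1) (a :: b :: w ++ [:: x 0%N; x 1%N]) ->
  Sigma0 M0 (prepend [:: a, b & w] x).
Proof.
move=> Sx; rewrite /eligible => /(pathP a) hp k.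
set u := [:: a, b & w].
have pv j : (j <= size u)%N -> prepend u x j = nth a (u ++ [:: x 0%N; x 1%N]) j.
  move=> ju; rewrite nth_cat; case: ltnP => ju'.
    by rewrite prepend_lt // (set_nth_default a).
  have -> : j = size u by apply/eqP; rewrite eqn_leq ju ju'.
  by rewrite prepend_ge // subnn.
case: (ltnP k (size u)) => ku.
  rewrite pv ?(ltnW ku) // pv //.
  have hk : (k < size (b :: w ++ [:: x 0%N; x 1%N]))%N.
    rewrite /u /= in ku; rewrite /= size_cat /=; lia.
  exact/eqP/(hp k hk).
rewrite !prepend_ge //; last by lia.
by rewrite subSn.
Qed.

End P.

Lemma geo (R : realType) n r :
  \sum_(i < r) (2:R) ^- (n + r - i) = 2 ^- n - 2 ^- (n + r).
Proof.
elim: r n => [|r IH] n; first by rewrite big_ord0 addn0 subrr.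
rewrite big_ord_recr /=.
have -> : \sum_(i < r) (2:R) ^- (n + r.+1 - i) = \sum_(i < r) (2:R) ^- (n.+1 + r - i).
  by apply: eq_bigr => i _; rewrite addnS addSn.
rewrite IH.
have -> : (n + r.+1 - r = n.+1)%N by lia.
have -> : (n.+1 + r = n + r.+1)%N by lia.
rewrite exprS invfM.
set y := (2 ^+ n)^-1; set z := 2 ^- _.
lra.
Qed.

Section Dist.
Variables (R : realType) (K N : nat) (M0 : 'M[int]_(K.+1 + N.+1)) (A' : 'M[int]_K.+1)
  (D' : 'M[int]_N.+1) (nA nD : nat) (phi : sq K N -> R) (Pm Cphi : R).
Hypothesis Lip : forall x y, Sigma0 M0 x -> Sigma0 M0 y ->
  `|phi x - phi y| <= Cphi * sq_dist x y.
Hypothesis C0 : 0 <= Cphi.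

Local Notation L := (LG M0 A' D' nA nD phi Pm).
Local Notation one := (fun y : sq K N => ((\1_(Gset M0) y : R))%:E).

Lemma shift_Sigma0 y i : Sigma0 M0 y -> Sigma0 M0 (shiftn i y).
Proof. by move=> h k; rewrite /shiftn (addnS i k); exact: h. Qed.

Lemma birk_diff y y' r n : Sigma0 M0 y -> Sigma0 M0 y' ->
  (forall t, (t < n + r)%N -> y t = y' t) ->
  birkhoff r phi y - birkhoff r phi y' <= Cphi * (2 ^- n - 2 ^- (n + r)).
Proof.
move=> Sy Sy' h; rewrite /birkhoff -sumrB -(geo R n r) mulr_sumr.
apply: ler_sum => i _.
apply: le_trans (ler_norm _) _.
apply: le_trans (Lip _ _ (shift_Sigma0 _ i Sy) (shift_Sigma0 _ i Sy')) _.
apply: ler_wpM2l => //; apply: dist_le => t tn; rewrite /shiftn; apply: h.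
have := ltn_ord i; lia.
Qed.

Lemma L_ge0 g x : (forall y, (0 <= g y)%E) -> (0 <= L g x)%E.
Proof.
move=> g0; rewrite /LG; apply: nneseries_ge0 => n _ _.
apply: sume_ge0 => a _; apply: sume_ge0 => b _; apply: sume_ge0 => w _.
case: asboolP => // _; apply: mule_ge0 => //; rewrite lee_fin expR_ge0.
Qed.

Lemma f_ge0 k y : (0 <= iter k L one y)%E.
Proof.
elim: k y => [|k IH] y /=; last exact: L_ge0.
by rewrite lee_fin /indic; case: (_ \in _).
Qed.

Lemma pc_eq a b w (x x' : sq K N) : x 0%N = x' 0%N -> x 1%N = x' 1%N ->
  preimage_cond M0 A' D' nA nD a b w x = preimage_cond M0 A' D' nA nD a b w x'.
Proof. by move=> h0 h1; rewrite /preimage_cond h0 h1. Qed.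

Lemma prepend_G a b w x : Gset M0 x -> preimage_cond M0 A' D' nA nD a b w x ->
  Gset M0 (prepend [:: a, b & w] x).
Proof.
move=> [Sx Gx] [ha [hb [_ [el _]]]]; split; first exact: prepend_Sigma0.
by rewrite /= ha hb eq_sym.
Qed.

Lemma f_dist k : forall n, (2 <= n)%N -> forall x x', Gset M0 x -> Gset M0 x' ->
  (forall t, (t < n)%N -> x t = x' t) ->
  (iter k L one x <= (expR (Cphi * 2 ^- n))%:E * iter k L one x')%E.
Proof.
have cn0 n : 0 <= Cphi * 2 ^- n by rewrite mulr_ge0 // invr_ge0 exprn_ge0.
elim: k => [|k IH] n n2 x x' Gx Gx' hxx.
  rewrite /= /indic !mem_set // mule1 lee_fin.
  apply: le_trans (expR_ge1Dx _); rewrite lerDl; exact: cn0.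
rewrite /=; set F := iter k L one; rewrite /LG.
have x0 : x 0%N = x' 0%N by apply: hxx; lia.
have x1 : x 1%N = x' 1%N by apply: hxx; lia.
rewrite -nneseriesZl; last first.
  move=> n0 _; apply: sume_ge0 => a _; apply: sume_ge0 => b _; apply: sume_ge0 => w _.
  case: asboolP => // _; apply: mule_ge0; [by rewrite lee_fin expR_ge0|exact: f_ge0].
apply: lee_nneseries => [n0 _ _|n0 _].
  apply: sume_ge0 => a _; apply: sume_ge0 => b _; apply: sume_ge0 => w _.
  case: asboolP => // _; apply: mule_ge0; [by rewrite lee_fin expR_ge0|exact: f_ge0].
have eg0 (z : R) : (0 <= (expR z)%:E)%E by rewrite lee_fin expR_ge0.
rewrite ge0_sume_distrr; last first.
  move=> a _; apply: sume_ge0 => b _; apply: sume_ge0 => w _.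
  case: asboolP => // _; apply: mule_ge0; [exact: eg0|exact: f_ge0].
apply: lee_sum => a _.
rewrite ge0_sume_distrr; last first.
  move=> b _; apply: sume_ge0 => w _.
  case: asboolP => // _; apply: mule_ge0; [exact: eg0|exact: f_ge0].
apply: lee_sum => b _.
rewrite ge0_sume_distrr; last first.
  move=> w _.
  case: asboolP => // _; apply: mule_ge0; [exact: eg0|exact: f_ge0].
apply: lee_sum => w _.
case: (asboolP (preimage_cond M0 A' D' nA nD a b w x)) => hc; last first.
  by case: asboolP => _; [apply: mule_ge0; [exact: eg0|apply: mule_ge0; [exact: eg0|exact: f_ge0]]|rewrite mule0].
have hc' := hc; rewrite (pc_eq a b w _ _ x0 x1) in hc'.
case: asboolP => // _.
set y := prepend _ x; set y' := prepend _ x'.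
have Gy : Gset M0 y by exact: prepend_G.
have Gy' : Gset M0 y' by exact: prepend_G.
have agr : forall t, (t < n + n0.+2)%N -> y t = y' t.
  move=> t ht; rewrite /y /y'; apply: (prepend_agree _ _ _ _ _ n hxx); by rewrite /= size_tuple.
have hy := IH (n + n0.+2)%N ltac:(lia) y y' Gy Gy' agr.
have hb := birk_diff _ _ _ _ Gy.1 Gy'.1 agr.
apply: le_trans (lee_wpmul2l (eg0 _) hy) _.
rewrite muleA -EFinM muleA -EFinM.
apply: lee_wpmul2r; first exact: f_ge0.
rewrite lee_fin -!expRD ler_expR.
move: hb; rewrite exprD invfM.
set u := 2 ^- n; set v := birkhoff _ _ y; set v' := birkhoff _ _ y'.
set z := u / _; set p := _ * Pm.
move=> hb; nra.
Qed.

Lemma ces_dist n0 x x' : Gset M0 x -> Gset M0 x' -> x 0%N = x' 0%N -> x 1%N = x' 1%N ->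
  (cesaro_LG M0 A' D' nA nD phi Pm n0 x <=
   (expR (Cphi * 2 ^- 2))%:E * cesaro_LG M0 A' D' nA nD phi Pm n0 x')%E.
Proof.
move=> Gx Gx' h0 h1; rewrite /cesaro_LG muleCA.
apply: lee_wpmul2l; first by rewrite lee_fin invr_ge0.
rewrite ge0_sume_distrr; last by move=> i _; exact: f_ge0.
apply: lee_sum => i _; apply: f_dist => // t.
by case: t => [|[|t]] // _.
Qed.

Lemma H_dist (H : sq K N -> R) :
  (forall e : R, 0 < e -> exists n0 : nat, forall n, (n0 <= n)%N ->
     forall x, Gset M0 x ->
       (`| cesaro_LG M0 A' D' nA nD phi Pm n x - (H x)%:E | < e%:E)%E) ->
  forall x x', Gset M0 x -> Gset M0 x' -> x 0%N = x' 0%N -> x 1%N = x' 1%N ->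
  H x <= expR (Cphi * 2 ^- 2) * H x'.
Proof.
move=> conv x x' Gx Gx' h0 h1; set c := expR _.
apply/ler_addgt0Pr => e e0.
have c0 : 0 < c + 1 by rewrite ltr_wpDl ?expR_ge0.
have e'0 : 0 < e / (c + 1) by rewrite divr_gt0.
have [n0 hn] := conv _ e'0.
have h1' := hn n0 (leqnn _) x Gx; have h2' := hn n0 (leqnn _) x' Gx'.
have hc := ces_dist n0 _ _ Gx Gx' h0 h1.
move: h1' h2' hc.
case: (cesaro_LG _ _ _ _ _ _ _ n0 x) => [r| |]; case: (cesaro_LG _ _ _ _ _ _ _ n0 x') => [r'| |] //.
rewrite -!EFinB /= !lte_fin -EFinM lee_fin -/c => ha hb hr.
move: ha hb; rewrite !ltr_norml => /andP[ha1 ha2] /andP[hb1 hb2].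
have hcr : c * r' <= c * (H x' + e / (c + 1)).
  by apply: ler_wpM2l; [rewrite expR_ge0 | lra].
have he : e / (c + 1) * (c + 1) = e by rewrite divfK // gt_eqF.
set q := e / (c + 1) in ha1 ha2 hb1 hb2 hcr he *.
nra.
Qed.

End Dist.
Section Meas.
Variables (K N : nat).

Definition pre (n : nat) (x : sq K N) : n.-tuple (letter K N) :=
  [tuple x (val i) | i < n].

Lemma cylw_meas n (w : n.-tuple (letter K N)) :
  measurable ([set x : sq K N | pre n x = w] : set (Msp K N)).
Proof.
apply: sub_gen_smallest.
exists n, (fun t => nth (lshift N.+1 (@ord0 K)) w t).
apply/seteqP; split => x /=.
  move=> <- t tn; by rewrite -[t]/(val (Ordinal tn)) -tnth_nth tnth_mktuple.
move=> H; apply: eq_from_tnth => i.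
rewrite tnth_mktuple (tnth_nth (lshift N.+1 (@ord0 K))).
exact: (H _ (ltn_ord i)).
Qed.

Lemma fin_meas n (Q : pred (n.-tuple (letter K N))) :
  measurable ([set x : sq K N | Q (pre n x)] : set (Msp K N)).
Proof.
have -> : ([set x : sq K N | Q (pre n x)] : set (Msp K N)) =
   \bigcup_(w in [set w | Q w]) [set x | pre n x = w].
  apply/seteqP; split => x /=; first by move=> Qx; exists (pre n x).
  by move=> [w Qw ->].
apply: fin_bigcup_measurable; first exact: finite_finset.
move=> w _; exact: cylw_meas.
Qed.

End Meas.
Arguments pre {K N} n x.
Arguments fin_meas {K N} n Q.

Section Meas2.
Variables (K N : nat).
Let d0 := lshift N.+1 (@ord0 K).

Lemma nth_pre n (x : sq K N) t : (t < n)%N -> nth d0 (pre n x) t = x t.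
Proof. by move=> h; rewrite -[t]/(val (Ordinal h)) -tnth_nth tnth_mktuple. Qed.

Lemma Sigma0_meas (M0 : 'M[int]_(K.+1 + N.+1)) :
  measurable (Sigma0 M0 : set (Msp K N)).
Proof.
have -> : (Sigma0 M0 : set (Msp K N)) = \bigcap_k
    [set x | (fun w : k.+2.-tuple _ => M0 (nth d0 w k) (nth d0 w k.+1) == 1) (pre k.+2 x)].
  apply/seteqP; split => x /=.
    by move=> Sx k _ /=; rewrite !nth_pre // Sx.
  by move=> h k; have := h k I; rewrite /= !nth_pre // => /eqP.
apply: bigcapT_measurable => k.
exact: (fin_meas k.+2 (fun w : k.+2.-tuple _ => M0 (nth d0 w k) (nth d0 w k.+1) == 1)).
Qed.

Lemma Gset_meas (M0 : 'M[int]_(K.+1 + N.+1)) :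
  measurable (Gset M0 : set (Msp K N)).
Proof.
apply: measurableI; first exact: Sigma0_meas.
have -> : [set x : sq K N | isA (x 0%N) != isA (x 1%N)] =
   [set x | (fun w : 2.-tuple _ => isA (nth d0 w 0) != isA (nth d0 w 1)) (pre 2 x)].
  by apply/seteqP; split => x /=; rewrite !nth_pre.
exact: (fin_meas 2 (fun w : 2.-tuple _ => isA (nth d0 w 0) != isA (nth d0 w 1))).
Qed.

Lemma cyl2_meas (a b : letter K N) : measurable (cyl2 a b : set (Msp K N)).
Proof.
have -> : cyl2 a b = [set x | (fun w : 2.-tuple _ => (nth d0 w 0 == a) && (nth d0 w 1 == b)) (pre 2 x)].
  apply/seteqP; split => x /=; rewrite !nth_pre //.
    by case=> h0 h1; apply/andP; split; apply/eqP.
  by move=> h; case/andP: h => /eqP h0 /eqP h1.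
exact: (fin_meas 2 (fun w : 2.-tuple _ => (nth d0 w 0 == a) && (nth d0 w 1 == b))).
Qed.
End Meas2.
Arguments Gset_meas {K N}.
Arguments Sigma0_meas {K N}.
Arguments cyl2_meas {K N}.

Lemma le_int_nomeas d (T : measurableType d) (R : realType)
  (mu : {measure set T -> \bar R}) (D : set T) (f g : T -> \bar R) :
  (forall x, D x -> (0 <= f x)%E) -> (forall x, D x -> (f x <= g x)%E) ->
  (\int[mu]_(x in D) f x <= \int[mu]_(x in D) g x)%E.
Proof.
move=> f0 fg; have g0 x : D x -> (0 <= g x)%E by move=> Dx; exact: le_trans (f0 _ Dx) (fg _ Dx).
rewrite !ge0_integralE //; apply: ereal_sup_le => _ [h hh <-]; exists h => // x.
apply: le_trans (hh x) _; rewrite /patch; case: ifPn => // /set_mem Dx; exact: fg.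
Qed.
Theorem lemma3 (R : realType) (K N : nat)
  (A : 'M[int]_K.+1) (D : 'M[int]_N.+1) (M0 : 'M[int]_(K.+1 + N.+1))
  (A' : 'M[int]_K.+1) (D' : 'M[int]_N.+1) (n_ n'_ : nat -> nat)
  (phi : sq K N -> R) (Cphi P : R) (m : nat)
  (nu : probability (Msp K N) R) (H : sq K N -> R) :
  (* A, D irreducible {0,1}-matrices; M0 a {0,1}-matrix with diagonal blocks A, D
     and some power with all entries positive *)
  zero_one A -> zero_one D -> zero_one M0 ->
  irreducible_mx A -> irreducible_mx D ->
  (forall i j, M0 (lshift N.+1 i) (lshift N.+1 j) = A i j) ->
  (forall i j, M0 (rshift K.+1 i) (rshift K.+1 j) = D i j) ->
  positive_power M0 ->
  (* phi Lipschitz on Sigma_0 with constant Cphi, same top_pressure P on Sigma_A, Sigma_D *)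
  (forall x y, Sigma0 M0 x -> Sigma0 M0 y -> `|phi x - phi y| <= Cphi * sq_dist x y) ->
  top_pressure (SigmaA M0) phi = P -> top_pressure (SigmaD M0) phi = P ->
  (* A' <= A, D' <= D, A' <> A, D' <> D, row conditions *)
  zero_one A' -> zero_one D' ->
  (forall i j, A' i j <= A i j) -> (forall i j, D' i j <= D i j) ->
  A' <> A -> D' <> D ->
  (forall k : 'I_K.+1, (exists i : 'I_N.+1, M0 (rshift K.+1 i) (lshift N.+1 k) = 1) ->
     exists j, A' k j != 0) ->
  (forall l : 'I_N.+1, (exists i : 'I_K.+1, M0 (lshift N.+1 i) (rshift K.+1 l) = 1) ->
     exists j, D' l j != 0) ->
  (* (n_m), (n'_m) increasing sequences tending to infinity *)
  (forall k, (n_ k < n_ k.+1)%N) -> (forall k, (n'_ k < n'_ k.+1)%N) ->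
  let Pm := top_pressure (SigmaM M0 A' D' (n_ m) (n'_ m)) phi in
  let L := LG M0 A' D' (n_ m) (n'_ m) phi Pm in
  (* nu_m: a probability on G with  int L f dnu = int f dnu *)
  nu (Gset M0) = 1%E ->
  (forall f : sq K N -> R, (forall x, Gset M0 x -> 0 <= f x) ->
     d_continuous_on (Gset M0) f ->
     (\int[nu]_(x in Gset M0) L (fun y => (f y)%:E) x =
      \int[nu]_(x in Gset M0) (f x)%:E)%E) ->
  (* H_m = lim (1/n) sum_{k<n} L^k 1_G, uniformly on G *)
  (forall e : R, 0 < e -> exists n0 : nat, forall n, (n0 <= n)%N ->
     forall x, Gset M0 x ->
       (`| cesaro_LG M0 A' D' (n_ m) (n'_ m) phi Pm n x - (H x)%:E | < e%:E)%E) ->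
  (* ... which is a positive continuous eigenfunction with int H dnu = 1 *)
  (forall x, Gset M0 x -> 0 < H x) -> d_continuous_on (Gset M0) H ->
  (forall x, Gset M0 x -> L (fun y => (H y)%:E) x = (H x)%:E) ->
  (\int[nu]_(x in Gset M0) (H x)%:E = 1)%E ->
  (\sum_(a : letter K N) \sum_(b : letter K N)
     (if green M0 a b then
        ereal_sup [set (H x)%:E | x in cyl2 a b `&` Sigma0 M0] * nu (cyl2 a b)
      else 0)
   <= (expR (Cphi / 2))%:E)%E.
Proof.
move=> zA zD zM iA iD hA hD pp Lip hPA hPD zA' zD' leA leD nAA nDD rowA rowD
  incn incn' Pm L nuG inv conv Hpos Hcont HL Hint.
have C0 := @Cphi_ge0 R K N M0 phi Cphi zM pp Lip.
set E := expR (Cphi / 2).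
have E0 : 0 < E := expR_gt0 _.
have Hd : forall x x', Gset M0 x -> Gset M0 x' -> x 0%N = x' 0%N -> x 1%N = x' 1%N ->
    H x <= E * H x'.
  move=> x x' Gx Gx' h0 h1.
  apply: le_trans (@H_dist R K N M0 A' D' (n_ m) (n'_ m) phi Pm Cphi Lip C0 H conv
    x x' Gx Gx' h0 h1) _.
  apply: ler_wpM2r; first exact/ltW/Hpos.
  rewrite ler_expR; apply: ler_wpM2l => //.
  by rewrite expr2 invfM ler_piMr // ?invr_ge0 // invf_le1 // ler1n.
have mG := Gset_meas M0.
have nuC : nu (~` Gset M0) = 0%E by rewrite probability_setC // nuG subee.
have nuCG c : measurable (c : set (Msp K N)) -> nu c = nu (c `&` Gset M0).
  move=> mc; rewrite (measureDI nu mc mG).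
  rewrite [X in (X + _)%E](_ : _ = 0%E) ?add0e //.
  apply/le_anti/andP; split; last exact: measure_ge0.
  rewrite -nuC; apply: le_measure; rewrite ?inE //; first exact: measurableD.
  exact: measurableC.
pose S a b := cyl2 a b `&` Gset M0.
have mS a b : measurable (S a b : set (Msp K N)) := measurableI _ _ (cyl2_meas a b) mG.
have SG a b : green M0 a b -> cyl2 a b `&` Sigma0 M0 = S a b.
  move=> /andP[hab _]; apply/seteqP; split => x.
    by move=> [[h0 h1] Sx]; split => //; split => //=; rewrite h0 h1.
  by move=> [h [Sx _]].
have hub a b x : S a b x -> forall y, S a b y -> H y <= E * H x.
  move=> [[xa xb] Gx] y [[ya yb] Gy]; apply: Hd => //; congruence.
pose s a b := sup [set H x | x in S a b].
have hsup a b x : S a b x -> s a b <= E * H x.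
  move=> Sx; apply: ge_sup; first by exists (H x), x.
  by apply/ubP => _ [y Sy <-]; exact: (hub _ _ _ Sx _ Sy).
have hsupE a b x : S a b x -> ereal_sup [set (H y)%:E | y in S a b] = (s a b)%:E.
  move=> Sx.
  have -> : [set (H y)%:E | y in S a b] = EFin @` [set H y | y in S a b].
    apply/seteqP; split.
      by move=> _ [y Sy <-]; exists (H y) => //; exists y.
    by move=> _ [_ [y Sy <-] <-]; exists y.
  apply: ereal_sup_EFin; last by exists (H x), x.
  by exists (E * H x); apply/ubP => _ [y Sy <-]; exact: (hub _ _ _ Sx _ Sy).
have s0 a b : 0 <= s a b.
  case: (pselect (S a b !=set0)) => [[x Sx]|hS].
    apply: le_trans (ltW (Hpos _ Sx.2)) _.
    apply: ub_le_sup; last by exists x.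
    by exists (E * H x); apply/ubP => _ [y Sy <-]; exact: (hub _ _ _ Sx _ Sy).
  have hS0 : S a b = set0 by apply/seteqP; split => // y Sy; apply: hS; exists y.
  by rewrite /s hS0 image_set0 sup0.
have nuS0 a b : (0 <= nu (S a b))%E by exact: measure_ge0.
have sE0 a b : 0 <= s a b / E by rewrite divr_ge0 // ltW.
apply: (@le_trans _ _ (\sum_a \sum_b
   (if green M0 a b then (s a b)%:E * nu (S a b) else 0))%E).
  apply: lee_sum => a _; apply: lee_sum => b _; case: ifP => // gab.
  rewrite (SG _ _ gab) (nuCG _ (cyl2_meas a b)).
  case: (pselect (S a b !=set0)) => [[x Sx]|hS].
    by rewrite (hsupE _ _ _ Sx).
  have hS0 : S a b = set0 by apply/seteqP; split => // y Sy; apply: hS; exists y.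
  by rewrite -/(S a b) hS0 measure0 !mule0.
have step2 : (\sum_a \sum_b
   (if green M0 a b then (s a b)%:E * nu (S a b) else 0) =
   E%:E * \sum_a \sum_b
   (if green M0 a b then (s a b / E)%:E * nu (S a b) else 0))%E.
  rewrite ge0_sume_distrr; last first.
    move=> a _; apply: sume_ge0 => b _; case: ifP => // _.
    by apply: mule_ge0; rewrite ?lee_fin.
  apply: eq_bigr => a _.
  rewrite ge0_sume_distrr; last first.
    by move=> b _; case: ifP => // _; apply: mule_ge0; rewrite ?lee_fin.
  apply: eq_bigr => b _; case: ifP => _; last by rewrite mule0.
  by rewrite muleA -EFinM mulrC divfK // gt_eqF.
rewrite step2.
have ind0 (A0 : set (sq K N)) y : (0:R) <= \1_A0 y by rewrite /indic; case: (y \in A0).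
pose g := fun x => (\sum_(p : letter K N * letter K N)
   (if green M0 p.1 p.2 then (s p.1 p.2 / E)%:E * (\1_(S p.1 p.2) x : R)%:E else 0))%E.
have g0 x : (0 <= g x)%E.
  apply: sume_ge0 => p _; case: ifP => // _; apply: mule_ge0; rewrite lee_fin //.
have step3 : (\sum_a \sum_b
   (if green M0 a b then (s a b / E)%:E * nu (S a b) else 0) =
   \int[nu]_(x in Gset M0) g x)%E.
  rewrite /g ge0_integral_sum //; last first.
    move=> p x _; case: ifP => // _; apply: mule_ge0; rewrite lee_fin //.
    move=> p; case: (green M0 p.1 p.2); last exact: measurable_cst.
    apply: measurable_funeM; apply/measurable_realfun.measurable_EFinP; exact: measurable_realfun.measurable_indic.
  rewrite pair_big /=; apply: eq_bigr => p _; case: (green M0 p.1 p.2); last first.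
    by rewrite integral0.
  rewrite ge0_integralZl_EFin //; last first.
    apply/measurable_realfun.measurable_EFinP; exact: measurable_realfun.measurable_indic.
  rewrite integral_indic // setIidl //; by move=> y [].
have step4 : (\int[nu]_(x in Gset M0) g x <= 1)%E.
  rewrite -Hint; apply: le_int_nomeas => // x Gx.
  rewrite /g (bigD1 (x 0%N, x 1%N)) //= big1 ?adde0; last first.
    move=> p /negP hp; case: ifP => // _.
    rewrite /indic memNset ?mule0 //.
    move=> [[h0 h1] _]; apply: hp; apply/eqP; case: p h0 h1 => p1 p2 /= -> -> //.
  have Sx : S (x 0%N) (x 1%N) x by split.
  have -> : green M0 (x 0%N) (x 1%N).
    by case: Gx => Sx0 hx; rewrite /green hx Sx0 eqxx.
  rewrite /indic mem_set // mule1 lee_fin ler_pdivrMr // mulrC.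
  exact: hsup.
rewrite step3; apply: le_trans (lee_wpmul2l _ step4) _; first by rewrite lee_fin ltW.
by rewrite mule1.
Qed.
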